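(* In any finite ELP, let $Q\in\mathcal Q$ and let $\pi$ be a policy. Put $\rho_\pi(s,a)=\rho_\pi(s)\pi(a|s)$ and $\lambda_\pi(s,a)=\rho_\pi(s,a)\mathbb E_\pi[T]$. Then $$\mathcal L_\pi(Q,\bar\lambda)\le\mathcal L_\pi(Q,\lambda_\pi)\le\mathcal L_\pi(\bar Q,\lambda_\pi)\quad\text{for all }\bar Q\in\mathcal Q,\ \bar\lambda\ge0$$ if and only if all of the following hold: (1) $\mathcal BQ(s,a)-Q(s,a)\le0$ for all $(s,a)\in\mathcal S\times\mathcal A$; (2) $\rho_\pi(s,a)\big(\mathcal BQ(s,a)-Q(s,a)\big)=0$ for all $(s,a)$; (3) $\rho_\pi(s,a)\big(\max_{\bar a}Q(s,\bar a)-Q(s,a)\big)=0$ for all $s\notin\mathcal S_\bot$ and all $a\in\mathcal A$.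
   Context: A finite ELP is $(\mathcal S,\mathcal A,P,R,\rho)$ with finite $\mathcal S,\mathcal A$, reward $R:\mathcal S\to\mathbb R$, transitions $P(s'|s,a)$, distribution $\rho$, and nonempty terminal set $\mathcal S_\bot$. Under a policy $\pi$, $S_0$ is a fixed terminal state, $A_t\sim\pi(\cdot|S_t)$, $S_{t+1}\sim P(\cdot|S_t,A_t)$, and $T=\inf\{t\ge1:S_t\in\mathcal S_\bot\}$. ELP conditions: $\mathbb E_\pi[T]<\infty$ for every $\pi$; $P(s'|s,a)=\rho(s')$ for all $s\in\mathcal S_\bot$, all $a,s'$; every state is reachable under some policy. $\mathcal Q$ = all functions $\mathcal S\times\mathcal A\to\mathbb R$; $\bar\lambda\ge0$ ranges over functions $\mathcal S\times\mathcal A\to[0,\infty)$. $\mathcal BQ(s,a)=\sum_{s'}P(s'|s,a)\big(R(s')+\mathbf 1[s'\notin\mathcal S_\bot]\max_{a'}Q(s',a')\big)$. $\mathcal L_\pi(Q,\lambda)=\mathbb E_\pi[Q(S_T,A_T)]+\sum_{s,a}\lambda(s,a)(\mathcal BQ(s,a)-Q(s,a))$ with $A_T\sim\pi(\cdot|S_T)$. $\rho_\pi(s)$ is the unique stationary distribution of the Markov chain on $\mathcal S$ with kernel $\sum_aP(s'|s,a)\pi(a|s)$. *)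

(* Defs.v *)
From HB Require Import structures.
From mathcomp Require Import all_boot all_order all_algebra.
From mathcomp Require Import all_classical all_reals all_analysis.
Set Implicit Arguments. Unset Strict Implicit. Unset Printing Implicit Defensive.
Import Order.TTheory GRing.Theory Num.Theory.
Import numFieldNormedType.Exports.
Local Open Scope ring_scope.

Section ELP.
Variables (R : realType) (S A : finType).

Definition is_dist (d : S -> R) : Prop :=
  (forall s, 0 <= d s) /\ \sum_s d s = 1.

(* P(s'|s,a) = P s a s' is a transition kernel *)
Definition is_kernel (P : S -> A -> S -> R) : Prop :=
  forall s a, is_dist (P s a).

(* pi(a|s) = pi s a is a (stochastic) policy *)
Definition is_policy (pi : S -> A -> R) : Prop :=
  forall s, (forall a, 0 <= pi s a) /\ \sum_a pi s a = 1.

Definition Ppi (P : S -> A -> S -> R) (pi : S -> A -> R) (s s' : S) : R :=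
  \sum_a P s a s' * pi s a.

Fixpoint state_law (P : S -> A -> S -> R) (pi : S -> A -> R) (s0 : S)
  (t : nat) : S -> R :=
  match t with
  | 0%N => fun s => if s == s0 then 1 else 0
  | t'.+1 => fun s' => \sum_s state_law P pi s0 t' s * Ppi P pi s s'
  end.

(* alive t s = Pr(S_t = s, T > t), with T = inf{t >= 1 : S_t \in Sbot} *)
Fixpoint alive (P : S -> A -> S -> R) (Sbot : {set S}) (pi : S -> A -> R)
  (s0 : S) (t : nat) : S -> R :=
  match t with
  | 0%N => fun s => if s == s0 then 1 else 0
  | t'.+1 => fun s' =>
      if s' \in Sbot then 0
      else \sum_s alive P Sbot pi s0 t' s * Ppi P pi s s'
  end.

Definition surv (P : S -> A -> S -> R) (Sbot : {set S}) (pi : S -> A -> R) (s0 : S) (t : nat) : R := \sum_s alive P Sbot pi s0 t s.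

(* Pr(T = t+1, S_T = s') *)
Definition stop_at (P : S -> A -> S -> R) (Sbot : {set S}) (pi : S -> A -> R) (s0 : S) (t : nat) (s' : S) : R :=
  if s' \in Sbot then \sum_s alive P Sbot pi s0 t s * Ppi P pi s s' else 0.

Definition ET_finite (P : S -> A -> S -> R) (Sbot : {set S}) (pi : S -> A -> R) (s0 : S) : Prop := cvgn (series (surv P Sbot pi s0)).

(* E_pi[T] = sum_{t >= 0} Pr(T > t) *)
Definition ET (P : S -> A -> S -> R) (Sbot : {set S}) (pi : S -> A -> R) (s0 : S) : R := limn (series (surv P Sbot pi s0)).

(* E_pi[Q(S_T, A_T)], A_T ~ pi(.|S_T) *)
Definition EQT (P : S -> A -> S -> R) (Sbot : {set S}) (pi : S -> A -> R) (s0 : S) (Q : S -> A -> R) : R :=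
  limn (series (fun t : nat =>
     \sum_s stop_at P Sbot pi s0 t s * (\sum_a pi s a * Q s a))).

Definition all_reachable (P : S -> A -> S -> R) (s0 : S) : Prop :=
  forall s, exists pi, is_policy pi /\ exists t, 0 < state_law P pi s0 t s.

Definition is_ELP (P : S -> A -> S -> R) (rho : S -> R) (Sbot : {set S})
  (s0 : S) : Prop :=
  [/\ is_kernel P, is_dist rho, Sbot != finset.set0 & s0 \in Sbot] /\
  [/\ (forall pi, is_policy pi -> ET_finite P Sbot pi s0),
      (forall s a s', s \in Sbot -> P s a s' = rho s')
    & all_reachable P s0].

Definition stationary (P : S -> A -> S -> R) (pi : S -> A -> R) (rhopi : S -> R) : Prop :=
  is_dist rhopi /\ forall s', \sum_s rhopi s * Ppi P pi s s' = rhopi s'.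

(* max_a f a over the (nonempty) finite action set; 0 if A is empty *)
Definition max_act (f : A -> R) : R :=
  match [pick a : A] with
  | Some a0 => \big[Num.max/f a0]_a f a
  | None => 0
  end.

Definition bellman (P : S -> A -> S -> R) (Rw : S -> R) (Sbot : {set S})
  (Q : S -> A -> R) (s : S) (a : A) : R :=
  \sum_s' P s a s' *
     (Rw s' + (if s' \in Sbot then 0 else max_act (Q s'))).

Definition lagr (P : S -> A -> S -> R) (Rw : S -> R) (Sbot : {set S}) (pi : S -> A -> R) (s0 : S) (Q lam : S -> A -> R) : R :=
  EQT P Sbot pi s0 Q
  + \sum_s \sum_a lam s a * (bellman P Rw Sbot Q s a - Q s a).

End ELP.

(* Main.v *)
Require Import Defs.
From HB Require Import structures.
From mathcomp Require Import all_boot all_order all_algebra.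
From mathcomp Require Import all_classical all_reals all_analysis.
From mathcomp Require Import ring lra.
Import Order.TTheory GRing.Theory Num.Theory.
Import numFieldNormedType.Exports.
Local Open Scope classical_set_scope.
Local Open Scope ring_scope.
Lemma cvg_sumseq (R : realType) (I : Type) (r : seq I) (u : I -> nat -> R) (l : I -> R) :
  (forall i, u i n @[n --> \oo] --> l i) ->
  (\sum_(i <- r) u i n) @[n --> \oo] --> \sum_(i <- r) l i.
Proof.
move=> H; elim: r => [|i r IH].
  rewrite big_nil; under eq_cvg do rewrite big_nil; exact: cvg_cst.
rewrite big_cons; under eq_cvg do rewrite big_cons.
exact: cvgD.
Qed.

Lemma cvg_fsum (R : realType) (I : finType) (u : I -> nat -> R) (l : I -> R) :
  (forall i, u i n @[n --> \oo] --> l i) ->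
  (\sum_i u i n) @[n --> \oo] --> \sum_i l i.
Proof. exact: cvg_sumseq. Qed.

Lemma limn_eq (R : realType) (u : nat -> R) l : u @ \oo --> l -> limn u = l.
Proof. by move=> H; apply: cvg_lim. Qed.
Arguments limn_eq {R u l}.
Lemma sum_ge_term (R : realType) (I : finType) (F : I -> R) i :
  (forall j, 0 <= F j) -> F i <= \sum_j F j.
Proof.
move=> F0; rewrite (bigD1 i) //= lerDl; exact: sumr_ge0.
Qed.

Arguments sum_ge_term {R I F} i _.

Lemma sum_gt0_ex (R : realType) (I : finType) (F : I -> R) :
  0 < \sum_j F j -> exists j, 0 < F j.
Proof.
move=> H; apply/not_existsP => /= hn.
have : \sum_j F j <= 0.
  apply: sumr_le0 => j _; rewrite leNgt; exact/negP/hn.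
by rewrite leNgt H.
Qed.

Lemma sum_eq0_ge0 (R : realType) (I : finType) (F : I -> R) j :
  (forall j, 0 <= F j) -> \sum_j F j = 0 -> F j = 0.
Proof.
move=> F0 H; apply/eqP; rewrite eq_le F0 andbT -H; exact: sum_ge_term.
Qed.


Lemma le_max_act (R : realType) (A : finType) (f : A -> R) a : f a <= max_act f.
Proof.
rewrite /max_act; case: pickP => [a0 _|h]; last by have := h a.
by rewrite (bigD1 a) //= le_max lexx.
Qed.

Lemma max_act_cst (R : realType) (A : finType) (k : R) (a : A) : max_act (fun _ : A => k) = k.
Proof.
rewrite /max_act; case: pickP => [a0 _|h]; last by have := h a.
by apply: (big_ind (fun x => x = k)) => // x y -> ->; rewrite maxxx.
Qed.

Lemma avg_le (R : realType) (A : finType) (p f : A -> R) :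
  (forall a, 0 <= p a) -> \sum_a p a = 1 -> \sum_a p a * f a <= max_act f.
Proof.
move=> hp h1; apply: le_trans (_ : \sum_a p a * max_act f <= _).
  apply: ler_sum => a _; apply: ler_wpM2l => //; exact: le_max_act.
by rewrite -mulr_suml h1 mul1r.
Qed.

Lemma sum_single (R : realType) (S A : finType) (F : S -> A -> R) s a :
  \sum_s' \sum_a' (if (s' == s) && (a' == a) then F s' a' else 0) = F s a.
Proof.
rewrite (bigD1 s) //= [X in _ + X]big1 ?addr0.
  rewrite (bigD1 a) //= !eqxx big1 ?addr0 // => a' /negbTE ->; by rewrite andbF.
by move=> s' /negbTE ->; rewrite big1.
Qed.

Lemma sum2_eq0 (R : realType) (S A : finType) (F : S -> A -> R) s a :
  (forall s a, 0 <= F s a) -> \sum_s \sum_a F s a = 0 -> F s a = 0.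
Proof.
move=> h0 h; apply: (@sum_eq0_ge0 _ _ (F s)) => //.
apply: (@sum_eq0_ge0 _ _ (fun s => \sum_a F s a)) => //.
by move=> j; apply: sumr_ge0.
Qed.

Section Main.
Variables (R : realType) (S A : finType) (P : S -> A -> S -> R) (rho : S -> R)
  (Sbot : {set S}) (s0 : S) (pi : S -> A -> R) (rhopi : S -> R).
Hypothesis hP : is_kernel P.
Hypothesis hrho : is_dist rho.
Hypothesis hs0 : s0 \in Sbot.
Hypothesis hterm : forall s a s', s \in Sbot -> P s a s' = rho s'.
Hypothesis hpi : is_policy pi.
Hypothesis hfin : ET_finite P Sbot pi s0.
Hypothesis hst : stationary P pi rhopi.
Hypothesis hreach : all_reachable P s0.
Hypothesis hfinall : forall sg, is_policy sg -> ET_finite P Sbot sg s0.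

Local Notation al := (alive P Sbot pi s0).
Local Notation K := (Ppi P pi).

Arguments sum_eq0_ge0 {R I F} j _ _.

Lemma Ppi_ge0 sg : is_policy sg -> forall s s', 0 <= Ppi P sg s s'.
Proof.
move=> hs s s'; apply: sumr_ge0 => a _; apply: mulr_ge0.
  by case: (hP s a) => H _; apply: H.
by case: (hs s) => H _; apply: H.
Qed.

Arguments Ppi_ge0 {sg}.

Lemma Ppi_sum1 sg : is_policy sg -> forall s, \sum_s' Ppi P sg s s' = 1.
Proof.
move=> hs s; rewrite /Ppi exchange_big /=.
rewrite -[RHS](proj2 (hs s)); apply: eq_bigr => a _.
by rewrite -mulr_suml (proj2 (hP s a)) mul1r.
Qed.

Lemma Ppi_term sg : is_policy sg -> forall s s', s \in Sbot -> Ppi P sg s s' = rho s'.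
Proof.
move=> hs s s' hs'; rewrite /Ppi.
under eq_bigr do rewrite hterm //.
by rewrite -mulr_sumr (proj2 (hs s)) mulr1.
Qed.

Lemma alive_ge0 sg : is_policy sg -> forall t s, 0 <= alive P Sbot sg s0 t s.
Proof.
move=> hs; elim=> [|t IH] s /=; first by case: (s == s0).
case: (s \in Sbot) => //; apply: sumr_ge0 => x _; apply: mulr_ge0 => //.
exact: Ppi_ge0.
Qed.

Arguments alive_ge0 {sg}.

Lemma state_law_ge0 sg : is_policy sg -> forall t s, 0 <= state_law P sg s0 t s.
Proof.
move=> hs; elim=> [|t IH] s /=; first by case: (s == s0).
apply: sumr_ge0 => x _; apply: mulr_ge0 => //; exact: Ppi_ge0.
Qed.

Arguments state_law_ge0 {sg}.

Definition Ns s := limn (series (fun t => al t s)).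

Lemma cvgN s : series (fun t => al t s) @ \oo --> Ns s.
Proof.
have : cvgn (series (fun t => al t s)); last by [].
apply: (series_le_cvg (v_ := surv P Sbot pi s0)) => //.
- by move=> n; exact: alive_ge0.
- by move=> n; apply: sumr_ge0 => x _; exact: alive_ge0.
- by move=> n; apply: sum_ge_term => j; exact: alive_ge0.
Qed.

Lemma series_sumK (f : S -> R) n :
  series (fun t => \sum_x al t x * f x) n = \sum_x series (fun t => al t x) n * f x.
Proof.
rewrite !seriesEnat /= exchange_big /=; apply: eq_bigr => x _.
by rewrite mulr_suml.
Qed.

Lemma cvg_sumK (f : S -> R) :
  series (fun t => \sum_x al t x * f x) @ \oo --> \sum_x Ns x * f x.
Proof.
under eq_cvg do rewrite series_sumK.
apply: cvg_fsum => x; apply: cvgMr_tmp; exact: cvgN.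
Qed.

Lemma Ns_nt s : s \notin Sbot -> Ns s = \sum_x Ns x * K x s.
Proof.
move=> hs.
have hs0' : (s == s0) = false.
  by apply/negP => /eqP E; move: hs; rewrite E hs0.
have h1 : (fun n => series (fun t => al t s) n.+1) @ \oo --> Ns s.
  by rewrite (cvg_shiftS (series (fun t => al t s))); exact: cvgN.
have E : (fun n => series (fun t => al t s) n.+1) =
         series (fun t => \sum_x al t x * K x s).
  apply: funext => n; rewrite seriesEnat /= big_nat_recl //= hs0' add0r.
  rewrite seriesEnat /=; apply: eq_bigr => t _ /=.
  by rewrite (negbTE hs).
rewrite E in h1.
exact: (cvg_unique _ h1 (cvg_sumK _)).
Qed.

Lemma Ns_term s : s \in Sbot -> Ns s = (s == s0)%:R.
Proof.
move=> hs.
have h1 : (fun n => series (fun t => al t s) n.+1) @ \oo --> Ns s.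
  by rewrite (cvg_shiftS (series (fun t => al t s))); exact: cvgN.
have E : (fun n => series (fun t => al t s) n.+1) = fun _ => (s == s0)%:R.
  apply: funext => n; rewrite seriesEnat /= big_nat_recl //=.
  rewrite big1 ?addr0; first by case: (s == s0).
  by move=> t _ /=; rewrite hs.
rewrite E in h1.
exact: (cvg_unique _ h1 (cvg_cst _)).
Qed.

Lemma Ns_ge0 s : 0 <= Ns s.
Proof.
apply: (limr_ge (cvgP _ (cvgN s))); near=> n.
apply: sumr_ge0 => t _; exact: alive_ge0.
Unshelve. all: by end_near.
Qed.

Lemma ET_eq : ET P Sbot pi s0 = \sum_s Ns s.
Proof.
apply: limn_eq.
have -> : series (surv P Sbot pi s0) = series (fun t => \sum_x al t x * 1).
  by apply: funext => n; congr series; apply: funext => t; under eq_bigr do rewrite mulr1.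
under eq_cvg do rewrite series_sumK.
apply: cvg_fsum => x; under eq_cvg do rewrite mulr1; exact: cvgN.
Qed.

Lemma EQT_eq (Qb : S -> A -> R) :
  EQT P Sbot pi s0 Qb =
  \sum_x Ns x * \sum_s' K x s' * (if s' \in Sbot then \sum_a pi s' a * Qb s' a else 0).
Proof.
rewrite /EQT; apply: limn_eq.
have -> : (fun t => \sum_s stop_at P Sbot pi s0 t s * (\sum_a pi s a * Qb s a)) =
   (fun t => \sum_x al t x *
      \sum_s' K x s' * (if s' \in Sbot then \sum_a pi s' a * Qb s' a else 0)).
  apply: funext => t; rewrite /stop_at.
  under [RHS]eq_bigr do rewrite mulr_sumr.
  rewrite exchange_big /=; apply: eq_bigr => s' _.
  case: (s' \in Sbot); last first.
    by rewrite mul0r big1 // => x _; rewrite !mulr0.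
  by rewrite mulr_suml; apply: eq_bigr => x _; rewrite mulrA.
exact: cvg_sumK.
Qed.

Definition cst := \sum_(b in Sbot) rhopi b.

Lemma Ksplit sg (v : S -> R) s' : is_policy sg ->
  \sum_x v x * Ppi P sg x s' =
  \sum_x (if x \in Sbot then 0 else v x) * Ppi P sg x s' + (\sum_(b in Sbot) v b) * rho s'.
Proof.
move=> hsg.
have E1 : \sum_x (if x \in Sbot then 0 else v x) * Ppi P sg x s' =
          \sum_(x | x \notin Sbot) v x * Ppi P sg x s'.
  rewrite (bigID (fun x => x \in Sbot)) /= big1 ?add0r.
    by apply: eq_bigr => x /negbTE ->.
  by move=> x ->; rewrite mul0r.
rewrite E1 (bigID (fun x => x \in Sbot)) /= addrC; congr (_ + _).
rewrite mulr_suml; apply: eq_bigr => x hx; by rewrite (@Ppi_term sg hsg).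
Qed.

Lemma cst_ge0 : 0 <= cst.
Proof. apply: sumr_ge0 => b _; exact: (proj1 (proj1 hst)). Qed.

Lemma rhopi_ge0 s : 0 <= rhopi s.
Proof. exact: (proj1 (proj1 hst)). Qed.

Lemma rhopi_split s' :
  rhopi s' = \sum_x (if x \in Sbot then 0 else rhopi x) * K x s' + cst * rho s'.
Proof. by rewrite -(proj2 hst s') Ksplit. Qed.

Lemma stepA n s :
  cst * series (fun t => al t.+1 s) n <= (if s \in Sbot then 0 else rhopi s).
Proof.
elim: n s => [|n IH] s.
  rewrite seriesEnat /= big_geq // mulr0; case: ifP => // _; exact: rhopi_ge0.
case: ifPn => hs.
  rewrite seriesEnat /= big1 ?mulr0 // => t _ /=; by rewrite hs.
have E : series (fun t => al t.+1 s) n.+1 =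
   K s0 s + \sum_x series (fun t => al t.+1 x) n * K x s.
  rewrite seriesEnat /= big_nat_recl //= (negbTE hs).
  rewrite (bigD1 s0) //= eqxx mul1r big1 ?addr0; last first.
    by move=> x /negbTE ->; rewrite mul0r.
  congr (_ + _).
  under [RHS]eq_bigr do rewrite seriesEnat /= mulr_suml.
  by rewrite exchange_big.
rewrite E (@Ppi_term pi hpi) // [X in _ <= X]rhopi_split mulrDr [X in _ <= X]addrC lerD2l.
rewrite mulr_sumr; apply: ler_sum => x _; rewrite mulrA; apply: ler_wpM2r.
  exact: Ppi_ge0.
exact: IH.
Qed.

Lemma stepA' s : s \notin Sbot -> cst * Ns s <= rhopi s.
Proof.
move=> hs.
have hs0' : (s == s0) = false.
  by apply/negP => /eqP E; move: hs; rewrite E hs0.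
have h1 : (fun n => cst * series (fun t => al t s) n.+1) @ \oo --> cst * Ns s.
  apply: cvgMl_tmp.
  by rewrite (cvg_shiftS (series (fun t => al t s))); exact: cvgN.
rewrite -(limn_eq h1); apply: (limr_le (cvgP _ h1)); near=> n.
have := stepA n s; rewrite (negbTE hs).
rewrite !seriesEnat /= big_nat_recl //= hs0' add0r.
by [].
Unshelve. all: by end_near.
Qed.

Definition wf s := if s \in Sbot then 0 else rhopi s - cst * Ns s.

Lemma wf_ge0 s : 0 <= wf s.
Proof.
rewrite /wf; case: ifPn => // hs; rewrite subr_ge0; exact: stepA'.
Qed.

Lemma sumNs_bot : \sum_(b in Sbot) Ns b = 1.
Proof.
rewrite (bigD1 s0) //= Ns_term // eqxx big1 ?addr0 //.
move=> b /andP [hb nb]; rewrite Ns_term //.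
by rewrite (negbTE nb).
Qed.

Lemma wf_eq s' : s' \notin Sbot -> wf s' = \sum_x wf x * K x s'.
Proof.
move=> hs; rewrite /wf (negbTE hs).
rewrite {1}rhopi_split (Ns_nt _ hs) (@Ksplit pi Ns s' hpi) sumNs_bot mul1r.
have -> : \sum_x (if x \in Sbot then 0 else rhopi x - cst * Ns x) * K x s' =
   \sum_x (if x \in Sbot then 0 else rhopi x) * K x s' -
   cst * \sum_x (if x \in Sbot then 0 else Ns x) * K x s'.
  rewrite mulr_sumr -sumrB; apply: eq_bigr => x _.
  case: ifP => _; first by rewrite !mul0r mulr0 subr0.
  by rewrite mulrBl mulrA.
rewrite mulrDr; ring.
Qed.


Lemma mul_pos_split (a b : R) : 0 <= a -> 0 <= b -> 0 < a * b -> 0 < a /\ 0 < b.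
Proof.
move=> ha hb H; split; rewrite lt_def ?ha ?hb andbT; apply/eqP => E; move: H;
  by rewrite E ?mul0r ?mulr0 ltxx.
Qed.

Arguments mul_pos_split {a b}.

Lemma wf_bot s : s \in Sbot -> wf s = 0.
Proof. by rewrite /wf => ->. Qed.

Definition Cb x := 0 < wf x.

Lemma Cb_nt x : Cb x -> x \notin Sbot.
Proof. rewrite /Cb; apply: contraTN => h; by rewrite wf_bot // ltxx. Qed.

Lemma Kn_eq x : \sum_y K x y =
  \sum_y (if y \in Sbot then 0 else K x y) + \sum_y (if y \in Sbot then K x y else 0).
Proof. rewrite -big_split /=; apply: eq_bigr => y _; case: ifP => _; by rewrite ?add0r ?addr0. Qed.

Lemma closed_row x : Cb x -> \sum_y (if y \in Sbot then 0 else K x y) = 1.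
Proof.
move=> hx.
have tot : \sum_x wf x * (1 - \sum_y (if y \in Sbot then 0 else K x y)) = 0.
  have E : \sum_y wf y = \sum_x wf x * \sum_y (if y \in Sbot then 0 else K x y).
    transitivity (\sum_y \sum_x wf x * (if y \in Sbot then 0 else K x y)).
      apply: eq_bigr => y _; case hy: (y \in Sbot).
        by rewrite wf_bot // big1 // => x' _; rewrite mulr0.
      by rewrite wf_eq ?hy.
    rewrite exchange_big /=; apply: eq_bigr => x' _; by rewrite mulr_sumr.
  under eq_bigr do rewrite mulrBr mulr1.
  by rewrite sumrB -E subrr.
have h0 : forall x', 0 <= wf x' * (1 - \sum_y (if y \in Sbot then 0 else K x' y)).
  move=> x' /=; apply: mulr_ge0; first exact: wf_ge0.
  rewrite subr_ge0 -(@Ppi_sum1 pi hpi x') [X in _ <= X]Kn_eq lerDl.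
  apply: sumr_ge0 => y _; case: ifP => // _; exact: Ppi_ge0.
have := sum_eq0_ge0 (F := fun x => wf x * (1 - \sum_y (if y \in Sbot then 0 else K x y))) x h0 tot.
move=> /eqP; rewrite mulf_eq0 => /orP [/eqP h|].
  by move: hx; rewrite /Cb h ltxx.
by rewrite subr_eq0 => /eqP <-.
Qed.

Lemma closed x y : Cb x -> 0 < K x y -> Cb y.
Proof.
move=> hx hK; case hy: (y \in Sbot).
  have h1 := @Ppi_sum1 pi hpi x; rewrite Kn_eq closed_row // in h1.
  have : K x y <= \sum_z (if z \in Sbot then K x z else 0).
    have := sum_ge_term (F := fun z => if z \in Sbot then K x z else 0) y.
    rewrite hy; apply => z; case: ifP => // _; exact: Ppi_ge0.
  have -> : \sum_z (if z \in Sbot then K x z else 0) = 0 by lra.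
  by rewrite leNgt hK.
rewrite /Cb wf_eq ?hy //.
apply: lt_le_trans (sum_ge_term (F := fun x' => wf x' * K x' y) x _).
  exact: mulr_gt0.
move=> j; apply: mulr_ge0; [exact: wf_ge0 | exact: Ppi_ge0].
Qed.

Lemma rowC x : Cb x -> \sum_y (if Cb y then K x y else 0) = 1.
Proof.
move=> hx; rewrite -(@Ppi_sum1 pi hpi x); apply: eq_bigr => y _.
case hy: (Cb y) => //; apply/eqP; rewrite eq_le (@Ppi_ge0 pi hpi) /= leNgt.
by apply/negP => /(closed _ _ hx); rewrite hy.
Qed.

Definition mixp (pj : S -> A -> R) x a := if Cb x then pi x a else pj x a.

Lemma mixp_pol pj : is_policy pj -> is_policy (mixp pj).
Proof. move=> h x; rewrite /mixp; case: (Cb x); [exact: hpi | exact: h]. Qed.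

Arguments mixp_pol {pj}.

Lemma Kmix pj x y : Ppi P (mixp pj) x y = if Cb x then K x y else Ppi P pj x y.
Proof. by rewrite /Ppi /mixp; case: (Cb x). Qed.

Lemma R1 pj : is_policy pj -> forall t s, 0 < state_law P pj s0 t s ->
  (exists k c, Cb c /\ 0 < state_law P (mixp pj) s0 k c) \/
  0 < state_law P (mixp pj) s0 t s.
Proof.
move=> hpj; have hm := mixp_pol hpj.
elim=> [|t IH] s /=; first by right.
move=> /sum_gt0_ex [x hx].
have [hsl hK] := mul_pos_split (state_law_ge0 hpj t x) (Ppi_ge0 hpj x s) hx.
case: (IH x hsl) => [h|h]; first by left.
case hC: (Cb x); first by left; exists t, x.
right.
apply: lt_le_trans (sum_ge_term (F := fun y => state_law P (mixp pj) s0 t y * Ppi P (mixp pj) y s) x _).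
  by rewrite /= Kmix hC; exact: mulr_gt0.
by move=> j; apply: mulr_ge0; [exact: state_law_ge0 | exact: Ppi_ge0].
Qed.

Lemma R2 sg : is_policy sg -> forall t s, 0 < state_law P sg s0 t s -> s \notin Sbot ->
  exists k, 0 < alive P Sbot sg s0 k s.
Proof.
move=> hsg; elim=> [|t IH] s /=.
  by case: eqP => [-> |]; [rewrite hs0 | rewrite ltxx].
move=> /sum_gt0_ex [x hx] hs.
have [hsl hK] := mul_pos_split (state_law_ge0 hsg t x) (Ppi_ge0 hsg x s) hx.
case hxb: (x \in Sbot).
  exists 1%N; rewrite /= (negbTE hs).
  apply: lt_le_trans (sum_ge_term (F := fun y => (if y == s0 then 1 else 0) * Ppi P sg y s) s0 _).
    by rewrite /= eqxx mul1r (@Ppi_term sg hsg) // -(@Ppi_term sg hsg x).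
  by move=> j; apply: mulr_ge0; [case: (j == s0) | exact: Ppi_ge0].
have [k hk] := IH x hsl (negbT hxb).
exists k.+1; rewrite /= (negbTE hs).
apply: lt_le_trans (sum_ge_term (F := fun y => alive P Sbot sg s0 k y * Ppi P sg y s) x _).
  by rewrite /=; exact: mulr_gt0.
by move=> j; apply: mulr_ge0; [exact: alive_ge0 | exact: Ppi_ge0].
Qed.

Lemma R3 pj : is_policy pj -> forall k c, Cb c -> forall n,
  alive P Sbot (mixp pj) s0 k c <=
  \sum_y (if Cb y then alive P Sbot (mixp pj) s0 (n + k) y else 0).
Proof.
move=> hpj k c hc; have hm := mixp_pol hpj.
set al' := alive P Sbot (mixp pj) s0.
have ge0 m : forall y, 0 <= (if Cb y then al' m y else 0).
  by move=> y; case: (Cb y) => //; exact: alive_ge0.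
elim=> [|n IH].
  rewrite add0n; have := sum_ge_term (F := fun y => if Cb y then al' k y else 0) c (ge0 _).
  by rewrite /= hc.
apply: le_trans IH _; set m := (n + k)%N; rewrite addSn -/m.
have E : \sum_x (if Cb x then al' m x else 0) =
   \sum_y (if Cb y then \sum_x (if Cb x then al' m x else 0) * K x y else 0).
  transitivity (\sum_y \sum_x (if Cb x then al' m x else 0) * (if Cb y then K x y else 0)).
    rewrite exchange_big /=; apply: eq_bigr => x _.
    case hx: (Cb x); last by rewrite big1 // => y _; rewrite mul0r.
    by rewrite -mulr_sumr rowC // mulr1.
  apply: eq_bigr => y _; case: (Cb y); last by rewrite big1 // => x _; rewrite mulr0.
  by [].
rewrite E; apply: ler_sum => y _; case hy: (Cb y) => //.
rewrite /al' /= (negbTE (Cb_nt _ hy)); apply: ler_sum => x _.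
rewrite Kmix; case: (Cb x) => //.
by rewrite mul0r; apply: mulr_ge0; [exact: alive_ge0 | exact: Ppi_ge0].
Qed.

Arguments R1 {pj}.
Arguments R2 {sg}.
Arguments R3 {pj}.

Lemma wf_zero s1 : wf s1 = 0.
Proof.
apply/eqP; rewrite eq_le wf_ge0 andbT leNgt; apply/negP => hpos.
have hC : Cb s1 by [].
have [pj [hpj [t ht]]] := hreach s1.
have hm := mixp_pol hpj.
have [k [c [hc hk]]] : exists k c, Cb c /\ 0 < state_law P (mixp pj) s0 k c.
  case: (R1 hpj _ _ ht) => // h; by exists t, s1.
have [k' hk'] := R2 hm _ _ hk (Cb_nt _ hc).
have h0 := cvg_series_cvg_0 (hfinall _ hm).
have : alive P Sbot (mixp pj) s0 k' c <= 0.
  rewrite -(limn_eq h0); apply: (limr_ge (cvgP _ h0)); near=> n.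
  have kn : (k' <= n)%N by near: n; exact: nbhs_infty_ge.
  rewrite -(subnK kn); apply: le_trans (R3 hpj _ _ hc (n - k')) _.
  apply: ler_sum => y _; case: (Cb y) => //; exact: alive_ge0.
by rewrite leNgt hk'.
Unshelve. all: by end_near.
Qed.

Lemma rho_eq_cM s' : rhopi s' = cst * \sum_x Ns x * K x s'.
Proof.
rewrite rhopi_split (@Ksplit pi Ns s' hpi) sumNs_bot mul1r mulrDr; congr (_ + _).
rewrite mulr_sumr; apply: eq_bigr => x _; case hx: (x \in Sbot).
  by rewrite !mul0r mulr0.
have := wf_zero x; rewrite /wf hx => /eqP; rewrite subr_eq0 => /eqP ->.
by rewrite mulrA.
Qed.

Lemma cET : cst * ET P Sbot pi s0 = 1.
Proof.
rewrite ET_eq -(proj2 (proj1 hst)).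
under [RHS]eq_bigr do rewrite rho_eq_cM.
rewrite -mulr_sumr exchange_big /=; congr (_ * _); apply: eq_bigr => x _.
by rewrite -mulr_sumr (@Ppi_sum1 pi hpi) mulr1.
Qed.

Lemma M_eq s' : \sum_x Ns x * K x s' = ET P Sbot pi s0 * rhopi s'.
Proof. by rewrite rho_eq_cM mulrA (mulrC _ cst) cET mul1r. Qed.

Lemma ET_gt0 : 0 < ET P Sbot pi s0.
Proof.
rewrite lt_def ET_eq sumr_ge0 ?andbT; last by move=> s _; exact: Ns_ge0.
apply/eqP => E; have := cET; rewrite ET_eq E mulr0 => /eqP; by rewrite eq_sym oner_eq0.
Qed.

Definition vQ (Qb : S -> A -> R) s := \sum_a pi s a * Qb s a.

Lemma lagr_formula (Rw : S -> R) (Qb : S -> A -> R) :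
  lagr P Rw Sbot pi s0 Qb (fun s a => rhopi s * pi s a * ET P Sbot pi s0) =
  ET P Sbot pi s0 * (\sum_s rhopi s * Rw s +
     \sum_s (if s \in Sbot then 0 else rhopi s * (max_act (Qb s) - vQ Qb s))).
Proof.
set ET0 := ET P Sbot pi s0.
set g := fun s' => Rw s' + (if s' \in Sbot then 0 else max_act (Qb s')).
have h1 : EQT P Sbot pi s0 Qb = ET0 * \sum_s rhopi s * (if s \in Sbot then vQ Qb s else 0).
  rewrite EQT_eq; under eq_bigr do rewrite mulr_sumr.
  rewrite exchange_big /= mulr_sumr; apply: eq_bigr => s' _.
  by rewrite mulrA -M_eq mulr_suml; apply: eq_bigr => x _; rewrite mulrA.
have hB s a : bellman P Rw Sbot Qb s a = \sum_s' P s a s' * g s' by [].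
have hBs s : \sum_a pi s a * bellman P Rw Sbot Qb s a = \sum_s' K s s' * g s'.
  under eq_bigr do rewrite hB mulr_sumr.
  rewrite exchange_big /=; apply: eq_bigr => s' _.
  by rewrite /Ppi mulr_suml; apply: eq_bigr => a _; rewrite mulrA (mulrC (pi s a)).
have h2 : \sum_s \sum_a (rhopi s * pi s a * ET0) * (bellman P Rw Sbot Qb s a - Qb s a) =
   ET0 * (\sum_s rhopi s * g s - \sum_s rhopi s * vQ Qb s).
  have -> : \sum_s rhopi s * g s = \sum_s rhopi s * \sum_a pi s a * bellman P Rw Sbot Qb s a.
    under [RHS]eq_bigr do rewrite hBs mulr_sumr.
    rewrite exchange_big /=; apply: eq_bigr => s' _.
    rewrite -(proj2 hst s') mulr_suml; apply: eq_bigr => x _; by rewrite mulrA.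
  rewrite -sumrB mulr_sumr; apply: eq_bigr => s _.
  rewrite /vQ !mulr_sumr -sumrB mulr_sumr; apply: eq_bigr => a _; ring.
rewrite /lagr h1 h2 -!mulrDr; congr (_ * _).
rewrite /g.
rewrite -sumrB -!big_split /=; apply: eq_bigr => s _.
case: (s \in Sbot); ring.
Qed.

Lemma Gterm (Qb : S -> A -> R) s :
  rhopi s * (max_act (Qb s) - vQ Qb s) = \sum_a rhopi s * pi s a * (max_act (Qb s) - Qb s a).
Proof.
under [RHS]eq_bigr do rewrite mulrBr.
rewrite sumrB /vQ mulrBr; congr (_ - _).
  by rewrite -mulr_suml -mulr_sumr (proj2 (hpi s)) mulr1.
by rewrite mulr_sumr; apply: eq_bigr => a _; rewrite mulrA.
Qed.

Lemma pi_ge0 s a : 0 <= pi s a.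
Proof. exact: (proj1 (hpi s)). Qed.

Lemma main_core (Rw : S -> R) (Q : S -> A -> R) :
  let lampi := fun s a => rhopi s * pi s a * ET P Sbot pi s0 in
  (forall (Qbar lambar : S -> A -> R), (forall s a, 0 <= lambar s a) ->
      lagr P Rw Sbot pi s0 Q lambar <= lagr P Rw Sbot pi s0 Q lampi /\
      lagr P Rw Sbot pi s0 Q lampi <= lagr P Rw Sbot pi s0 Qbar lampi)
  <->
  [/\ (forall s a, bellman P Rw Sbot Q s a - Q s a <= 0),
      (forall s a, rhopi s * pi s a * (bellman P Rw Sbot Q s a - Q s a) = 0)
    & (forall s, s \notin Sbot -> forall a,
          rhopi s * pi s a * (max_act (Q s) - Q s a) = 0)].
Proof.
move=> lampi.
set d := fun s a => bellman P Rw Sbot Q s a - Q s a.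
have ETp := ET_gt0.
have [a0 _] : exists a : A, true.
  case: (pickP (fun _ : A => true)) => [a0 _|h]; first by exists a0.
  have := proj2 (hpi s0); rewrite big1 => [/eqP|a]; last by have := h a.
  by rewrite eq_sym oner_eq0.
have lampi_ge0 s a : 0 <= lampi s a.
  by rewrite /lampi; apply: mulr_ge0; [apply: mulr_ge0; [exact: rhopi_ge0|exact: pi_ge0]|exact: ltW].
have Gge0 (Qb : S -> A -> R) s :
    0 <= (if s \in Sbot then 0 else rhopi s * (max_act (Qb s) - vQ Qb s)).
  case: ifP => // _; apply: mulr_ge0; first exact: rhopi_ge0.
  rewrite subr_ge0; apply: avg_le; [exact: pi_ge0 | exact: (proj2 (hpi s))].
split.
- move=> H.
  have hX lam : (forall s a, 0 <= lam s a) ->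
      \sum_s \sum_a lam s a * d s a <= \sum_s \sum_a lampi s a * d s a.
    by move=> hl; have := proj1 (H Q lam hl); rewrite /lagr lerD2l.
  have h1 : forall s a, d s a <= 0.
    move=> s a; rewrite leNgt; apply/negP => hd.
    set X := \sum_s \sum_a lampi s a * d s a.
    set m := (`|X| + 1) / d s a.
    have hm : 0 <= m by apply: divr_ge0; [apply: addr_ge0 | exact: ltW].
    have hl : forall s' a', 0 <= (if (s' == s) && (a' == a) then m else 0).
      by move=> s' a'; case: ifP.
    have E : \sum_s' \sum_a' (if (s' == s) && (a' == a) then m else 0) * d s' a' = m * d s a.
      rewrite -(@sum_single _ _ _ (fun s' a' => m * d s' a') s a).
      apply: eq_bigr => s' _; apply: eq_bigr => a' _; case: ifP => _ //; by rewrite mul0r.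
    have := hX _ hl; rewrite E /m divfK ?gt_eqF // => hle.
    have hlt : X < `|X| + 1 by apply: le_lt_trans (ler_norm X) _; rewrite ltrDl.
    by have := lt_le_trans hlt hle; rewrite ltxx.
  have h2 : forall s a, rhopi s * pi s a * d s a = 0.
    have hX0 := hX (fun _ _ => 0) (fun _ _ => lexx 0).
    have Xle : \sum_s \sum_a lampi s a * d s a <= 0.
      apply: sumr_le0 => s _; apply: sumr_le0 => a _; apply: mulr_ge0_le0 => //.
    have X0 : \sum_s \sum_a lampi s a * d s a = 0.
      apply/eqP; rewrite eq_le Xle /=; apply: le_trans hX0.
      by rewrite big1 // => s _; rewrite big1 // => a _; rewrite mul0r.
    move=> s a.
    have : - (lampi s a * d s a) = 0.
      apply: (@sum2_eq0 _ _ _ (fun s a => - (lampi s a * d s a))).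
        move=> s' a'; rewrite oppr_ge0; exact: mulr_ge0_le0.
      by under eq_bigr do rewrite sumrN; rewrite sumrN X0 oppr0.
    move/eqP; rewrite /lampi oppr_eq0 -mulrA (mulrC _ (d s a)) mulrA mulf_eq0 => /orP [/eqP //|].
    by rewrite gt_eqF.
  split => //.
  move=> s hs a.
  pose Qbar : S -> A -> R := fun z _ => max_act (Q z).
  have := proj2 (H Qbar (fun _ _ => 0) (fun _ _ => lexx 0)).
  rewrite /lampi !lagr_formula ler_pM2l // lerD2l.
  have -> : \sum_s (if s \in Sbot then 0
        else rhopi s * (max_act (Qbar s) - vQ Qbar s)) = 0.
    apply: big1 => s' _; case: ifP => // _.
    by rewrite /Qbar max_act_cst // /vQ -mulr_suml (proj2 (hpi s')) mul1r subrr mulr0.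
  move=> hle.
  have hsum : \sum_s (if s \in Sbot then 0 else rhopi s * (max_act (Q s) - vQ Q s)) = 0.
    by apply/eqP; rewrite eq_le hle sumr_ge0 // => s' _; exact: Gge0.
  have := sum_eq0_ge0 (F := fun s => if s \in Sbot then 0 else rhopi s * (max_act (Q s) - vQ Q s)) s (Gge0 Q) hsum.
  rewrite /= (negbTE hs) Gterm => hz.
  apply: (sum_eq0_ge0 (F := fun a => rhopi s * pi s a * (max_act (Q s) - Q s a))) => // a'.
  apply: mulr_ge0; first by apply: mulr_ge0; [exact: rhopi_ge0 | exact: pi_ge0].
  by rewrite subr_ge0 le_max_act.
- case=> h1 h2 h3 Qbar lam hl; split.
    rewrite /lagr lerD2l.
    have -> : \sum_s \sum_a lampi s a * (bellman P Rw Sbot Q s a - Q s a) = 0.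
      apply: big1 => s _; apply: big1 => a _.
      by rewrite /lampi -mulrA (mulrC _ (_ - _)) mulrA h2 mul0r.
    apply: sumr_le0 => s _; apply: sumr_le0 => a _; exact: mulr_ge0_le0.
  rewrite /lampi !lagr_formula ler_pM2l // lerD2l.
  have -> : \sum_s (if s \in Sbot then 0 else rhopi s * (max_act (Q s) - vQ Q s)) = 0.
    apply: big1 => s _; case: ifPn => // hs.
    by rewrite Gterm big1 // => a _; rewrite h3.
  by apply: sumr_ge0 => s _; exact: Gge0.
Qed.

End Main.

Theorem mainTheorem7 (R : realType) (S A : finType)
  (P : S -> A -> S -> R) (Rw : S -> R) (rho : S -> R) (Sbot : {set S})
  (s0 : S)
  (hELP : is_ELP P rho Sbot s0)
  (pi : S -> A -> R) (hpi : is_policy pi)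
  (rhopi : S -> R) (hst : stationary P pi rhopi)
  (Q : S -> A -> R) :
  let lampi := fun s a => rhopi s * pi s a * ET P Sbot pi s0 in
  (forall (Qbar lambar : S -> A -> R), (forall s a, 0 <= lambar s a) ->
      lagr P Rw Sbot pi s0 Q lambar <= lagr P Rw Sbot pi s0 Q lampi /\
      lagr P Rw Sbot pi s0 Q lampi <= lagr P Rw Sbot pi s0 Qbar lampi)
  <->
  [/\ (forall s a, bellman P Rw Sbot Q s a - Q s a <= 0),
      (forall s a, rhopi s * pi s a * (bellman P Rw Sbot Q s a - Q s a) = 0)
    & (forall s, s \notin Sbot -> forall a,
          rhopi s * pi s a * (max_act (Q s) - Q s a) = 0)].
Proof.
case: hELP => [[hP hrho hne hs0] [hfinall hterm hreach]].
have hfin := hfinall pi hpi.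
exact: (@main_core R S A P rho Sbot s0 pi rhopi hP hs0 hterm hpi hfin hst hreach hfinall Rw Q).
Qed.
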